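(* Let $\lambda$ be an infinite cardinal with $\lambda^{\aleph_0}=\lambda$, and let $t_k:\lambda^+\to\lambda^+$ ($k<\omega$) be functions. Then there is a function $F:\lambda^+\to\lambda$ such that whenever $\alpha\neq\beta$ are ordinals below $\lambda^+$ with $F(\alpha)=F(\beta)$, there are no $i,j<\omega$ with $\alpha<t_i(\beta)<t_j(\alpha)$. *)

(* Defs.v *)
(* cardinals modelled by types and injections. *)
From Stdlib Require Import Relations Wellfounded.

Definition card_le (A B : Type) : Prop :=
  exists f : A -> B, forall x y, f x = f y -> x = y.

(* |A| = |B| (both inequalities; equivalent to a bijection by
   Cantor-Schroeder-Bernstein) *)
Definition card_eq (A B : Type) : Prop := card_le A B /\ card_le B A.

(* (K, lt) is a well-order of order type lambda^+, where lambda = |L|: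
   a strict well-order all of whose proper initial segments have
   cardinality <= |L|, while K itself has cardinality > |L|.
   (This is exactly the initial ordinal of the successor cardinal of |L|.) *)
Record is_succ_card_order (L K : Type) (lt : K -> K -> Prop) : Prop := {
  sco_wf : well_founded lt;
  sco_trans : forall x y z, lt x y -> lt y z -> lt x z;
  sco_total : forall x y, lt x y \/ x = y \/ lt y x;
  sco_seg_small : forall a : K, card_le {x : K | lt x a} L;
  sco_big : ~ card_le K L
}.

(* Main.v *)
Require Import Defs.
From Stdlib Require Import Relations Wellfounded Classical ClassicalEpsilon FunctionalExtensionality.

Notation emi := excluded_middle_informative.
Notation cid := constructive_indefinite_description.

Lemma wf_irrefl (K : Type) (lt : K -> K -> Prop) : well_founded lt -> forall x, ~ lt x x.
Proof. intros wf x. induction (wf x) as [x _ IH]. intro h. exact (IH x h h). Qed.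

Lemma wf_min (K : Type) (lt : K -> K -> Prop) (wf : well_founded lt) (P : K -> Prop) (z : K) :
  P z -> exists m, P m /\ forall w, P w -> ~ lt w m.
Proof.
  induction (wf z) as [z _ IH]; intros Pz.
  destruct (classic (exists w, P w /\ lt w z)) as [[w [Pw hw]]|N].
  - exact (IH w hw Pw).
  - exists z; split; auto. intros w Pw hw; apply N; eauto.
Qed.

Definition code3 {L : Type} (iota : (nat -> L) -> L) (a b c : L) : L :=
  iota (fun k => match k with 0 => a | 1 => b | _ => c end).

Lemma code3_inj {L : Type} (iota : (nat -> L) -> L) (Hi : forall x y, iota x = iota y -> x = y)
  a b c a' b' c' : code3 iota a b c = code3 iota a' b' c' -> a = a' /\ b = b' /\ c = c'.
Proof.
  unfold code3; intro H; apply Hi in H.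
  repeat split; [apply (f_equal (fun g => g 0) H) | apply (f_equal (fun g => g 1) H)
                | apply (f_equal (fun g => g 2) H)].
Qed.

Lemma uncount {L : Type} (iota : (nat -> L) -> L) (Hi : forall x y, iota x = iota y -> x = y)
  (j : nat -> L) (Hj : forall x y, j x = j y -> x = y) :
  forall s : nat -> L, exists y, forall n, s n <> y.
Proof.
  intro s.
  pose (h := fun n => match emi (exists g, iota g = s n) with
                      | left e => proj1_sig (cid _ e) | right _ => fun _ : nat => j 0 end).
  pose (f := fun n => if emi (h n n = j 0) then j 1 else j 0).
  exists (iota f). intros n E.
  assert (Hh : h n = f).
  { unfold h. destruct (emi _) as [e|ne].
    - apply Hi. destruct (cid _ e) as [g Hg]; simpl. congruence.
    - exfalso; apply ne; exists f; congruence. }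
  assert (Hf : f n = if emi (f n = j 0) then j 1 else j 0).
  { unfold f at 1. rewrite Hh. reflexivity. }
  destruct (emi (f n = j 0)) as [e|e].
  - rewrite e in Hf. apply Hj in Hf. discriminate.
  - exact (e Hf).
Qed.

Lemma card_le_option {L A : Type} (iota : (nat -> L) -> L) (Hi : forall x y, iota x = iota y -> x = y)
  (j : nat -> L) (Hj : forall x y, j x = j y -> x = y) :
  card_le A L -> card_le (option A) L.
Proof.
  intros [s Hs].
  exists (fun o => match o with None => code3 iota (j 0) (j 0) (j 0)
                           | Some a => code3 iota (j 1) (s a) (j 0) end).
  intros [a|] [b|] H; apply (code3_inj iota Hi) in H; auto; destruct H as [H1 [H2 _]].
  - rewrite (Hs _ _ H2); reflexivity.
  - apply Hj in H1; discriminate.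
  - apply Hj in H1; discriminate.
Qed.

Lemma card_le_prod {L A : Type} (iota : (nat -> L) -> L) (Hi : forall x y, iota x = iota y -> x = y)
  (j : nat -> L) (Hj : forall x y, j x = j y -> x = y) :
  card_le A L -> card_le (nat * A) L.
Proof.
  intros [s Hs].
  exists (fun p => code3 iota (j (fst p)) (s (snd p)) (j 0)).
  intros [n a] [m b] H; apply (code3_inj iota Hi) in H; destruct H as [H1 [H2 _]]; simpl in *.
  apply Hj in H1; apply Hs in H2; subst; reflexivity.
Qed.

Lemma segE_exists (L K : Type) (lt : K -> K -> Prop) (HK : is_succ_card_order L K lt) (d : L) :
  exists E : K -> K -> L, forall δ w w', lt w δ -> lt w' δ -> E δ w = E δ w' -> w = w'.
Proof.
  pose (e := fun δ => proj1_sig (cid _ (sco_seg_small _ _ _ HK δ))).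
  assert (he : forall δ x y, e δ x = e δ y -> x = y).
  { intro δ. exact (proj2_sig (cid _ (sco_seg_small _ _ _ HK δ))). }
  exists (fun δ w => match emi (lt w δ) with left h => e δ (exist _ w h) | right _ => d end).
  intros δ w w' h h' E.
  destruct (emi (lt w δ)) as [a|a]; [|contradiction].
  destruct (emi (lt w' δ)) as [b|b]; [|contradiction].
  apply he in E. apply (f_equal (@proj1_sig _ _)) in E. exact E.
Qed.

Lemma bounded (L K : Type) (lt : K -> K -> Prop) (HK : is_succ_card_order L K lt)
  (iota : (nat -> L) -> L) (Hi : forall x y, iota x = iota y -> x = y)
  (j : nat -> L) (Hj : forall x y, j x = j y -> x = y)
  (I : Type) (f : I -> K) : card_le I L -> exists z, forall i, lt (f i) z.
Proof.
  intros [σ Hσ]. apply NNPP; intro N. apply (sco_big _ _ _ HK).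
  destruct (segE_exists L K lt HK (j 0)) as [E HE].
  assert (Hc : forall z, exists i, ~ lt (f i) z).
  { intro z; apply NNPP; intro M; apply N; exists z; intro i; apply NNPP; intro h; apply M; eauto. }
  pose (ch := fun z => proj1_sig (cid _ (Hc z))).
  assert (Hch : forall z, ~ lt (f (ch z)) z) by (intro z; exact (proj2_sig (cid _ (Hc z)))).
  exists (fun z => code3 iota (σ (ch z)) (if emi (z = f (ch z)) then j 0 else j 1) (E (f (ch z)) z)).
  intros z z' H. apply (code3_inj iota Hi) in H; destruct H as [H1 [H2 H3]]. apply Hσ in H1.
  destruct (emi (z = f (ch z))) as [e1|n1]; destruct (emi (z' = f (ch z'))) as [e2|n2].
  - rewrite e1, e2, H1. reflexivity.
  - apply Hj in H2; discriminate.
  - apply Hj in H2; discriminate.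
  - assert (l1 : lt z (f (ch z))).
    { destruct (sco_total _ _ _ HK (f (ch z)) z) as [h|[h|h]]; [exfalso; exact (Hch z h)|exfalso; auto|exact h]. }
    assert (l2 : lt z' (f (ch z'))).
    { destruct (sco_total _ _ _ HK (f (ch z')) z') as [h|[h|h]]; [exfalso; exact (Hch z' h)|exfalso; auto|exact h]. }
    rewrite <- H1 in l2, H3. exact (HE _ _ _ l1 l2 H3).
Qed.

Theorem lemma1 (L K : Type) (lt : K -> K -> Prop)
  (L_infinite : card_le nat L)
  (L_pow : card_eq (nat -> L) L)
  (HK : is_succ_card_order L K lt)
  (t : nat -> K -> K) :
  exists F : K -> L,
    forall a b : K, a <> b -> F a = F b ->
      ~ (exists i j : nat, lt a (t i b) /\ lt (t i b) (t j a)).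
Proof.
  destruct L_pow as [[iota Hi] _]. destruct L_infinite as [j Hj].
  pose proof (sco_wf _ _ _ HK) as wf.
  pose proof (sco_trans _ _ _ HK) as tr.
  pose proof (sco_total _ _ _ HK) as tot.
  pose proof (wf_irrefl _ _ wf) as irr.
  destruct (segE_exists L K lt HK (j 0)) as [E HE].
  assert (next : forall g, exists z, lt g z /\ forall n w, (lt w g \/ w = g) -> lt (t n w) z).
  { intro g.
    destruct (bounded L K lt HK iota Hi j Hj (option (nat * option {w | lt w g}))
       (fun o => match o with None => g | Some (n, None) => t n g
                 | Some (n, Some w) => t n (proj1_sig w) end)) as [z Hz].
    { apply (card_le_option iota Hi j Hj), (card_le_prod iota Hi j Hj),
            (card_le_option iota Hi j Hj). exact (sco_seg_small _ _ _ HK g). }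
    exists z; split; [exact (Hz None)|].
    intros n w [h| ->]. exact (Hz (Some (n, Some (exist _ w h)))). exact (Hz (Some (n, None))). }
  pose (closed := fun δ => forall w n, lt w δ -> lt (t n w) δ).
  assert (above : forall y, exists δ, lt y δ /\ closed δ).
  { intro y.
    pose (nx := fun g => proj1_sig (cid _ (next g))).
    assert (Hnx : forall g, lt g (nx g) /\ forall n w, (lt w g \/ w = g) -> lt (t n w) (nx g))
      by (intro g; exact (proj2_sig (cid _ (next g)))).
    pose (γ := fun k => nat_rect (fun _ => K) y (fun _ g => nx g) k).
    destruct (bounded L K lt HK iota Hi j Hj nat γ (ex_intro _ j Hj)) as [z Hz].
    destruct (wf_min K lt wf (fun δ => forall k, lt (γ k) δ) z Hz) as [m [Hm Hmin]].
    exists m. split; [exact (Hm 0)|].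
    intros w n hw.
    assert (ex : exists k, ~ lt (γ k) w).
    { apply NNPP; intro N; apply (Hmin w); auto. intro k; apply NNPP; intro h; apply N; eauto. }
    destruct ex as [k hk].
    assert (h1 : lt (t n w) (γ (S k))).
    { simpl. apply (proj2 (Hnx (γ k))).
      destruct (tot (γ k) w) as [h|[h|h]]; [contradiction|right; auto|left; auto]. }
    exact (tr _ _ _ h1 (Hm (S k))). }
  assert (Dex : forall y, exists δ, lt y δ /\ closed δ /\ forall δ', lt y δ' -> closed δ' -> ~ lt δ' δ).
  { intro y. destruct (above y) as [z Hz].
    destruct (wf_min K lt wf (fun δ => lt y δ /\ closed δ) z Hz) as [m [[Hm1 Hm2] Hmin]].
    exists m; repeat split; auto. }
  pose (D := fun y => proj1_sig (cid _ (Dex y))).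
  assert (HD : forall y, lt y (D y) /\ closed (D y) /\ forall δ', lt y δ' -> closed δ' -> ~ lt δ' (D y))
    by (intro y; exact (proj2_sig (cid _ (Dex y)))).
  assert (P2 : forall n y, lt (t n y) (D y)).
  { intros n y. destruct (HD y) as [h1 [h2 _]]. exact (h2 y n h1). }
  assert (P1 : forall y z, (lt y z \/ y = z) -> lt z (D y) -> D z = D y).
  { intros y z hyz hz.
    assert (yD : lt y (D z)) by (destruct (HD z) as [h _]; destruct hyz as [h'| ->]; eauto).
    destruct (tot (D z) (D y)) as [h|[h|h]]; auto; exfalso.
    - destruct (HD z) as [_ [c _]]. destruct (HD y) as [_ [_ mn]]. exact (mn _ yD c h).
    - destruct (HD y) as [_ [c _]]. destruct (HD z) as [_ [_ mn]]. exact (mn _ hz c h). }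
  pose (p := fun y => E (D y) y).
  assert (pinj : forall a b, D a = D b -> p a = p b -> a = b).
  { intros a b hD hp. unfold p in hp. rewrite hD in hp.
    apply (HE (D b)); auto. rewrite <- hD. apply HD. apply HD. }
  pose (avoid := fun s : nat -> L => proj1_sig (cid _ (uncount iota Hi j Hj s))).
  assert (Havoid : forall s n, s n <> avoid s)
    by (intros s; exact (proj2_sig (cid _ (uncount iota Hi j Hj s)))).
  pose (pick := fun b n => match emi (exists β, lt β b /\ p β = p b /\ D β = D (t n b)) with
                           | left e => Some (proj1_sig (cid _ e)) | right _ => None end).
  pose (Fstep := fun b (rec : forall β, lt β b -> L) =>
          avoid (fun n => match pick b n with
                          | Some β => match emi (lt β b) with left h => rec β h | right _ => j 0 end
                          | None => j 0 end)).
  pose (q := Fix wf (fun _ => L) Fstep).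
  assert (qeq : forall b, q b = Fstep b (fun y _ => q y)).
  { intro b. unfold q. refine (Fix_eq wf (fun _ => L) Fstep _ b). intros x f g Hfg. unfold Fstep. f_equal.
    apply functional_extensionality. intro n.
    destruct (pick x n) as [β|]; auto. destruct (emi (lt β x)); auto. }
  assert (qspec : forall β b n, lt β b -> p β = p b -> D β = D (t n b) -> q β <> q b).
  { intros β b n h1 h2 h3. rewrite (qeq b). unfold Fstep.
    match goal with |- _ <> avoid ?s => assert (sn : s n = q β); [|rewrite <- sn; exact (Havoid s n)] end.
    unfold pick. destruct (emi _) as [e|ne].
    - destruct (cid _ e) as [β' [k1 [k2 k3]]]; simpl.
      assert (β' = β) as ->.
      { apply pinj; congruence. }
      destruct (emi (lt β b)); [reflexivity|contradiction].
    - exfalso; apply ne; exists β; auto. }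
  exists (fun a => code3 iota (p a) (q a) (j 0)).
  intros a b hab hF [i [k [h1 h2]]].
  apply (code3_inj iota Hi) in hF. destruct hF as [hp [hq _]].
  assert (xD : lt (t i b) (D a)) by exact (tr _ _ _ h2 (P2 k a)).
  assert (Dx : D (t i b) = D a) by (apply P1; auto).
  destruct (classic (D b = D a)) as [e|ne].
  - apply hab. apply pinj; auto.
  - assert (ab : lt a b).
    { destruct (tot a b) as [h|[h|h]]; auto; [contradiction|].
      exfalso. destruct (tot a (D b)) as [h'|[h'|h']].
      + apply ne. symmetry. apply P1; auto.
      + subst a. apply (irr (D b)). exact (tr _ _ _ h1 (P2 i b)).
      + apply (irr a). exact (tr _ _ _ h1 (tr _ _ _ (P2 i b) h')). }
    exact (qspec a b i ab hp (eq_sym Dx) hq).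
Qed.
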